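(* Let $\sigma\in\{1,-1\}$, $L>0$, $T>0$, $\Omega=[0,L]\times[0,T]$, and let $q_1,q_2$ be smooth complex-valued solutions on $\Omega$ of $$iq_{jt}+q_{jxx}-2\sigma(|q_1|^2+|q_2|^2)q_j=0,\qquad j=1,2.$$ With $s(k)$, $S(k)$, $S_L(k)$, $M_n$ and $S_n$ as defined below, set $\mathcal{A}(k)=s(k)\,e^{-ikL\hat\Lambda}S_L(k)=(\mathcal{A}_{ij})_{i,j=1}^3$. Then, for $k\in D_n$ (at points where $M_n$ is defined and the denominators below are nonzero), $$S_1=\begin{pmatrix}\frac{1}{m_{11}(\mathcal{A})}&\mathcal{A}_{12}&\mathcal{A}_{13}\\0&\mathcal{A}_{22}&\mathcal{A}_{23}\\0&\mathcal{A}_{32}&\mathcal{A}_{33}\end{pmatrix},\qquad S_2=\begin{pmatrix}\frac{S_{11}}{(S^Ts^A)_{11}}&s_{12}&s_{13}\\ \frac{S_{21}}{(S^Ts^A)_{11}}&s_{22}&s_{23}\\ \frac{S_{31}}{(S^Ts^A)_{11}}&s_{32}&s_{33}\end{pmatrix},$$ $$S_3=\begin{pmatrix}s_{11}&\frac{m_{33}(s)m_{21}(S)-m_{23}(s)m_{31}(S)}{(s^TS^A)_{11}}&\frac{m_{32}(s)m_{21}(S)-m_{22}(s)m_{31}(S)}{(s^TS^A)_{11}}\\ s_{21}&\frac{m_{33}(s)m_{11}(S)-m_{13}(s)m_{31}(S)}{(s^TS^A)_{11}}&\frac{m_{32}(s)m_{11}(S)-m_{12}(s)m_{31}(S)}{(s^TS^A)_{11}}\\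 s_{31}&\frac{m_{23}(s)m_{11}(S)-m_{13}(s)m_{21}(S)}{(s^TS^A)_{11}}&\frac{m_{22}(s)m_{11}(S)-m_{12}(s)m_{21}(S)}{(s^TS^A)_{11}}\end{pmatrix},$$ $$S_4=\begin{pmatrix}\mathcal{A}_{11}&0&0\\ \mathcal{A}_{21}&\frac{m_{33}(\mathcal{A})}{\mathcal{A}_{11}}&\frac{m_{32}(\mathcal{A})}{\mathcal{A}_{11}}\\ \mathcal{A}_{31}&\frac{m_{23}(\mathcal{A})}{\mathcal{A}_{11}}&\frac{m_{22}(\mathcal{A})}{\mathcal{A}_{11}}\end{pmatrix},$$ where $(S^Ts^A)_{11}=S_{11}m_{11}(s)-S_{21}m_{21}(s)+S_{31}m_{31}(s)$ and $(s^TS^A)_{11}=s_{11}m_{11}(S)-s_{21}m_{21}(S)+s_{31}m_{31}(S)$.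
   Context: Notation: $\Lambda=\mathrm{diag}(-1,1,1)$; $V_1=\begin{pmatrix}0&q_1&q_2\\ \sigma\bar q_1&0&0\\ \sigma\bar q_2&0&0\end{pmatrix}$; $V_2=2kV_1+i\Lambda(V_1^2-V_{1x})$. For a $3\times3$ matrix $X$ and scalar $\theta$, $e^{\theta\hat\Lambda}X=e^{\theta\Lambda}Xe^{-\theta\Lambda}$. $m_{ij}(X)$ is the $(i,j)$ minor of $X$ (determinant after deleting row $i$ and column $j$), and $X^A$ is the cofactor matrix with entries $(-1)^{i+j}m_{ij}(X)$; $X_{ij}$ denotes the entries of $X$. Corners: $c_1=(0,T)$, $c_2=(0,0)$, $c_3=(L,0)$, $c_4=(L,T)$. For $j=1,\dots,4$, $\mu_j(x,t,k)$ is the solution of $$\mu_j(x,t,k)=I+\int_{c_j}^{(x,t)}e^{(ik(x-x')+2ik^2(t-t'))\hat\Lambda}\big[(V_1dx'+V_2dt')\mu_j(x',t',k)\big]$$ (integral along any path in $\Omega$; the one-form is closed). Spectral functions: $s(k)=\mu_3(0,0,k)$, $S(k)=\mu_1(0,0,k)$, $S_L(k)=\mu_4(L,0,k)$. Domains: $D_1,D_2,D_3,D_4$ are the open first, second, third and fourth quadrants of the complex $k$-plane (i.e. $D_1=\{\operatorname{Re}k>0,\operatorname{Im}k>0\}$, $D_2=\{\operatorname{Re}k<0,\operatorname{Im}k>0\}$, $D_3=\{\operatorname{Re}k<0,\operatorname{Im}k<0\}$, $D_4=\{\operatorname{Re}k>0,\operatorname{Im}k<0\}$). For $n=1,\dots,4$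 and $k\in D_n$, $M_n(x,t,k)$ is the $3\times3$ matrix solution of the system $$(M_n)_{ij}(x,t,k)=\delta_{ij}+\int_{c(n,i,j)}^{(x,t)}\Big(e^{(ik(x-x')+2ik^2(t-t'))\hat\Lambda}\big[(V_1dx'+V_2dt')M_n(x',t',k)\big]\Big)_{ij},\quad i,j=1,2,3,$$ where the starting corner $c(n,i,j)=c_{\gamma}$ with $\gamma=\gamma^n_{ij}$ given by the index matrices $$\gamma^1=\begin{pmatrix}4&4&4\\2&4&4\\2&4&4\end{pmatrix},\ \gamma^2=\begin{pmatrix}3&3&3\\1&3&3\\1&3&3\end{pmatrix},\ \gamma^3=\begin{pmatrix}3&1&1\\3&3&3\\3&3&3\end{pmatrix},\ \gamma^4=\begin{pmatrix}4&2&2\\4&4&4\\4&4&4\end{pmatrix}.$$ Finally $S_n(k)=M_n(0,0,k)$ for $k\in D_n$. *)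

(* Defs.v *)
From Stdlib Require Import Reals.
From Coquelicot Require Import Coquelicot.

Open Scope R_scope.

Definition cexp (z : C) : C := (exp (Re z) * cos (Im z), exp (Re z) * sin (Im z)).

Local Open Scope C_scope.

(* ---------- 3x3 complex matrices, indices 1,2,3 (as in the paper) ---------- *)
Definition Mat := nat -> nat -> C.

Definition sum3 (f : nat -> C) : C := f 1%nat + f 2%nat + f 3%nat.
Definition mmul (A B : Mat) : Mat := fun i j => sum3 (fun l => A i l * B l j).
Definition madd (A B : Mat) : Mat := fun i j => A i j + B i j.
Definition idm : Mat := fun i j => if Nat.eqb i j then 1 else 0.
Definition transpose (A : Mat) : Mat := fun i j => A j i.

Definition meq (A B : Mat) : Prop :=
  forall i j, (1 <= i <= 3)%nat -> (1 <= j <= 3)%nat -> A i j = B i j.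

Definition mk3 (a11 a12 a13 a21 a22 a23 a31 a32 a33 : C) : Mat :=
  fun i j => match i, j with
  | 1, 1 => a11 | 1, 2 => a12 | 1, 3 => a13
  | 2, 1 => a21 | 2, 2 => a22 | 2, 3 => a23
  | 3, 1 => a31 | 3, 2 => a32 | 3, 3 => a33
  | _, _ => RtoC 0 end%nat.

Definition others (i : nat) : nat * nat :=
  match i with 1 => (2, 3) | 2 => (1, 3) | _ => (1, 2) end%nat.

Definition minor (X : Mat) (i j : nat) : C :=
  let (r1, r2) := others i in let (c1, c2) := others j in
  X r1 c1 * X r2 c2 - X r1 c2 * X r2 c1.

Definition cofactor (X : Mat) : Mat :=
  fun i j => if Nat.even (i + j) then minor X i j else - minor X i j.

Definition Lam (i : nat) : C := if Nat.eqb i 1 then -1 else 1.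
Definition LamM : Mat := fun i j => if Nat.eqb i j then Lam i else 0.

(* e^{theta \hat Lambda} X = e^{theta Lambda} X e^{-theta Lambda} *)
Definition hatexp (theta : C) (X : Mat) : Mat :=
  fun i j => cexp (theta * (Lam i - Lam j)) * X i j.

Definition inOmega (L T x t : R) : Prop := (0 <= x <= L)%R /\ (0 <= t <= T)%R.

Definition cont_on (L T : R) (f : R -> R -> C) : Prop :=
  forall x t, inOmega L T x t -> forall eps : R, (0 < eps)%R ->
    exists d : R, (0 < d)%R /\ forall x' t', inOmega L T x' t' ->
      (Rabs (x' - x) < d)%R -> (Rabs (t' - t) < d)%R -> (Cmod (f x' t' - f x t) < eps)%R.

Definition mcont_on (L T : R) (M : R -> R -> Mat) : Prop :=
  forall i j, (1 <= i <= 3)%nat -> (1 <= j <= 3)%nat -> cont_on L T (fun x t => M x t i j).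

(* Smoothness on Omega: D n m is the partial derivative d^n/dx^n d^m/dt^m of f = D 0 0;
   all of them exist at every point of Omega and are continuous on Omega. *)
Definition smooth_on (L T : R) (D : nat -> nat -> R -> R -> C) : Prop :=
  forall n m : nat,
    cont_on L T (D n m) /\
    forall x t, inOmega L T x t ->
      @is_derive R_AbsRing C_R_NormedModule (fun y => D n m y t) x (D (S n) m x t) /\
      @is_derive R_AbsRing C_R_NormedModule (fun s => D n m x s) t (D n (S m) x t).

(* the coupled NLS system  i q_jt + q_jxx - 2 sigma (|q1|^2+|q2|^2) q_j = 0 on Omega,
   with q_j = Qj 0 0, q_jt = Qj 0 1, q_jxx = Qj 2 0 *)
Definition nls_system (sigma L T : R) (Q1 Q2 : nat -> nat -> R -> R -> C) : Prop :=
  forall x t, inOmega L T x t ->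
    let r := RtoC (Cmod (Q1 0 0 x t)%nat ^ 2 + Cmod (Q2 0 0 x t)%nat ^ 2)%R in
    Ci * Q1 0%nat 1%nat x t + Q1 2%nat 0%nat x t - 2 * RtoC sigma * r * Q1 0%nat 0%nat x t = 0 /\
    Ci * Q2 0%nat 1%nat x t + Q2 2%nat 0%nat x t - 2 * RtoC sigma * r * Q2 0%nat 0%nat x t = 0.

Definition V1m (sigma : R) (q1 q2 : C) : Mat :=
  mk3 0 q1 q2
      (RtoC sigma * Cconj q1) 0 0
      (RtoC sigma * Cconj q2) 0 0.

Definition V1 (sigma : R) (Q1 Q2 : nat -> nat -> R -> R -> C) (x t : R) : Mat :=
  V1m sigma (Q1 0%nat 0%nat x t) (Q2 0%nat 0%nat x t).

Definition V1x (sigma : R) (Q1 Q2 : nat -> nat -> R -> R -> C) (x t : R) : Mat :=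
  V1m sigma (Q1 1%nat 0%nat x t) (Q2 1%nat 0%nat x t).

Definition V2 (sigma : R) (k : C) (Q1 Q2 : nat -> nat -> R -> R -> C) (x t : R) : Mat :=
  fun i j =>
    2 * k * V1 sigma Q1 Q2 x t i j
    + Ci * Lam i * (mmul (V1 sigma Q1 Q2 x t) (V1 sigma Q1 Q2 x t) i j
                    - V1x sigma Q1 Q2 x t i j).

Definition theta (k : C) (x t x' t' : R) : C :=
  Ci * k * RtoC (x - x') + 2 * Ci * k * k * RtoC (t - t').

Definition corner (L T : R) (j : nat) : R * R :=
  match j with 1%nat => (0%R, T) | 2%nat => (0%R, 0%R) | 3%nat => (L, 0%R) | _ => (L, T) end.

Definition RIntC (f : R -> C) (a b : R) : C := @RInt C_R_CompleteNormedModule f a b.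

(* M solves, entry by entry, the integral equation
     M_ij(x,t) = delta_ij + int_{start i j}^{(x,t)} (e^{theta hatLambda}[(V1 dx' + V2 dt') M])_ij
   where the line integral of the closed one-form is taken along both
   axis-parallel two-segment paths inside Omega (t first then x, and x first then t);
   M is moreover continuous on Omega. *)
Definition int_eq (sigma L T : R) (k : C) (Q1 Q2 : nat -> nat -> R -> R -> C)
  (start : nat -> nat -> R * R) (M : R -> R -> Mat) : Prop :=
  mcont_on L T M /\
  forall x t, inOmega L T x t ->
  forall i j, (1 <= i <= 3)%nat -> (1 <= j <= 3)%nat ->
    let x0 := fst (start i j) in
    let t0 := snd (start i j) in
    let F1 := fun x' t' => hatexp (theta k x t x' t')
                 (mmul (V1 sigma Q1 Q2 x' t') (M x' t')) i j in
    let F2 := fun x' t' => hatexp (theta k x t x' t')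
                 (mmul (V2 sigma k Q1 Q2 x' t') (M x' t')) i j in
    M x t i j = idm i j + (RIntC (fun t' => F2 x0 t') t0 t + RIntC (fun x' => F1 x' t) x0 x) /\
    M x t i j = idm i j + (RIntC (fun x' => F1 x' t0) x0 x + RIntC (fun t' => F2 x t') t0 t).

Definition is_mu (sigma L T : R) (k : C) (Q1 Q2 : nat -> nat -> R -> R -> C)
  (j : nat) (mu : R -> R -> Mat) : Prop :=
  int_eq sigma L T k Q1 Q2 (fun _ _ => corner L T j) mu.

Definition gamma (n i j : nat) : nat :=
  match n with
  | 1 => match i, j with 2, 1 | 3, 1 => 2 | _, _ => 4 end
  | 2 => match i, j with 2, 1 | 3, 1 => 1 | _, _ => 3 end
  | 3 => match i, j with 1, 2 | 1, 3 => 1 | _, _ => 3 end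
  | _ => match i, j with 1, 2 | 1, 3 => 2 | _, _ => 4 end
  end%nat.

Definition is_M (sigma L T : R) (k : C) (Q1 Q2 : nat -> nat -> R -> R -> C)
  (n : nat) (M : R -> R -> Mat) : Prop :=
  int_eq sigma L T k Q1 Q2 (fun i j => corner L T (gamma n i j)) M.

Definition inD (n : nat) (k : C) : Prop :=
  match n with
  | 1 => (0 < Re k /\ 0 < Im k)%R
  | 2 => (Re k < 0 /\ 0 < Im k)%R
  | 3 => (Re k < 0 /\ Im k < 0)%R
  | _ => (0 < Re k /\ Im k < 0)%R
  end%nat.

(* below, bare numerals are matrix indices (nat); complex constants are written RtoC _ *)
Local Open Scope nat_scope.
Local Open Scope C_scope.
Definition Amat (k : C) (L : R) (s SL : Mat) : Mat :=
  mmul s (hatexp (- (Ci * k * RtoC L)) SL).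

Definition d2 (s S : Mat) : C := mmul (transpose S) (cofactor s) 1%nat 1%nat.
Definition d3 (s S : Mat) : C := mmul (transpose s) (cofactor S) 1%nat 1%nat.

Definition denom (n : nat) (k : C) (L : R) (s S SL : Mat) : C :=
  let A := Amat k L s SL in
  match n with
  | 1%nat => minor A 1 1
  | 2%nat => d2 s S
  | 3%nat => d3 s S
  | _ => A 1 1
  end.

Definition Sformula (n : nat) (k : C) (L : R) (s S SL : Mat) : Mat :=
  let A := Amat k L s SL in
  match n with
  | 1%nat => mk3 (RtoC 1%R / minor A 1 1) (A 1 2) (A 1 3)
             (RtoC 0%R) (A 2 2) (A 2 3)
             (RtoC 0%R) (A 3 2) (A 3 3)
  | 2%nat => let d := d2 s S in
         mk3 (S 1 1 / d) (s 1 2) (s 1 3)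
             (S 2 1 / d) (s 2 2) (s 2 3)
             (S 3 1 / d) (s 3 2) (s 3 3)
  | 3%nat => let d := d3 s S in
         mk3 (s 1 1)
             ((minor s 3 3 * minor S 2 1 - minor s 2 3 * minor S 3 1) / d)
             ((minor s 3 2 * minor S 2 1 - minor s 2 2 * minor S 3 1) / d)
             (s 2 1)
             ((minor s 3 3 * minor S 1 1 - minor s 1 3 * minor S 3 1) / d)
             ((minor s 3 2 * minor S 1 1 - minor s 1 2 * minor S 3 1) / d)
             (s 3 1)
             ((minor s 2 3 * minor S 1 1 - minor s 1 3 * minor S 2 1) / d)
             ((minor s 2 2 * minor S 1 1 - minor s 1 2 * minor S 2 1) / d)
  | _ => mk3 (A 1 1) (RtoC 0%R) (RtoC 0%R)
             (A 2 1) (minor A 3 3 / A 1 1) (minor A 3 2 / A 1 1)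
             (A 3 1) (minor A 2 3 / A 1 1) (minor A 2 2 / A 1 1)
  end.

(* Main.v *)
Require Import Defs.
From Stdlib Require Import Reals.
From Coquelicot Require Import Coquelicot.
From Stdlib Require Import Lra Lia FunctionalExtensionality.

Module Mod_B1a.
Open Scope R_scope.

Notation Cder f x l := (@is_derive R_AbsRing C_R_NormedModule f x l).
Notation Ccont f x := (@continuous R_UniformSpace C_UniformSpace f x).

Lemma Cder_fst (f : R -> C) x (l : C) :
  Cder f x l -> is_derive (fun y => fst (f y)) x (fst l).
Proof.
  intros H. unfold is_derive. eapply filterdiff_ext_lin.
  apply (filterdiff_comp f (fun t : C_R_NormedModule => fst t) _ (fun t : C_R_NormedModule => fst t) H).
  apply filterdiff_linear. apply (@is_linear_fst R_AbsRing R_NormedModule R_NormedModule).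
  intros y. simpl. reflexivity.
Qed.

Lemma Cder_snd (f : R -> C) x (l : C) :
  Cder f x l -> is_derive (fun y => snd (f y)) x (snd l).
Proof.
  intros H. unfold is_derive. eapply filterdiff_ext_lin.
  apply (filterdiff_comp f (fun t : C_R_NormedModule => snd t) _ (fun t : C_R_NormedModule => snd t) H).
  apply filterdiff_linear. apply (@is_linear_snd R_AbsRing R_NormedModule R_NormedModule).
  intros y. simpl. reflexivity.
Qed.

Lemma Cder_pair (f : R -> C) x (l : C) :
  is_derive (fun y => fst (f y)) x (fst l) ->
  is_derive (fun y => snd (f y)) x (snd l) -> Cder f x l.
Proof.
  intros [_ H1] [_ H2]. split.
  - apply is_linear_scal_l.
  - intros x' Hx' eps.
    assert (He : 0 < eps / 2) by (destruct eps; simpl; lra).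
    specialize (H1 x' Hx' (mkposreal _ He)). specialize (H2 x' Hx' (mkposreal _ He)).
    generalize (filter_and _ _ H1 H2). apply filter_imp.
    intros y [A B]. simpl in A, B.
    change (norm (minus (minus (f y) (f x')) (scal (minus y x') l)))
      with (sqrt (norm (minus (minus (fst (f y)) (fst (f x'))) (scal (minus y x') (fst l))) ^ 2
                 + norm (minus (minus (snd (f y)) (snd (f x'))) (scal (minus y x') (snd l))) ^ 2)).
    set (a := norm (minus (minus (fst (f y)) (fst (f x'))) (scal (minus y x') (fst l)))) in *.
    set (b := norm (minus (minus (snd (f y)) (snd (f x'))) (scal (minus y x') (snd l)))) in *.
    set (n := norm (minus y x')) in *.
    destruct (sqrt_plus_sqr a b) as [_ Hs].
    assert (Hs2 : sqrt 2 <= 2).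
    { rewrite <- (sqrt_square 2) at 2 by lra. apply sqrt_le_1_alt. lra. }
    assert (Ha : 0 <= a) by apply norm_ge_0.
    assert (Hb : 0 <= b) by apply norm_ge_0.
    assert (Hn : 0 <= n) by apply norm_ge_0.
    rewrite (Rabs_pos_eq a Ha), (Rabs_pos_eq b Hb) in Hs.
    assert (Hm : Rmax a b <= eps / 2 * n).
    { apply Rmax_lub; [exact A | exact B]. }
    assert (0 <= sqrt 2) by apply sqrt_pos.
    assert (0 <= Rmax a b) by (apply Rle_trans with a; [lra| apply Rmax_l]).
    apply Rle_trans with (1 := Hs).
    apply Rle_trans with (2 * (eps/2 * n)).
    + apply Rle_trans with (sqrt 2 * (eps/2*n)).
      * apply Rmult_le_compat_l; lra.
      * apply Rmult_le_compat_r; [|lra]. apply Rmult_le_pos; [|lra]. destruct eps; simpl in *; lra.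
    + right. assert (Hf : forall e m : R, 2 * (e/2*m) = e * m) by (intros; field). apply Hf.
Qed.


End Mod_B1a.
Import Mod_B1a.

Module Mod_B1b.
Open Scope R_scope.

Lemma Cder_mult (f g : R -> C) x df dg :
  Cder f x df -> Cder g x dg -> Cder (fun y => f y * g y)%C x (df * g x + f x * dg)%C.
Proof.
  intros Hf Hg.
  pose proof (Cder_fst _ _ _ Hf) as f1. pose proof (Cder_snd _ _ _ Hf) as f2.
  pose proof (Cder_fst _ _ _ Hg) as g1. pose proof (Cder_snd _ _ _ Hg) as g2.
  apply Cder_pair.
  - pose proof (is_derive_minus _ _ x _ _ (is_derive_mult _ _ x _ _ f1 g1 Rmult_comm)
                                        (is_derive_mult _ _ x _ _ f2 g2 Rmult_comm)) as H.
    assert (E : fst (df * g x + f x * dg)%C = minus (plus (mult (fst df) (fst (g x))) (mult (fst (f x)) (fst dg))) (plus (mult (snd df) (snd (g x))) (mult (snd (f x)) (snd dg)))).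
    { destruct df, dg, (f x), (g x); simpl. unfold minus, plus, opp, mult; simpl. ring. }
    rewrite E. eapply is_derive_ext; [|exact H]. intros t; simpl. destruct (f t), (g t); reflexivity.
  - pose proof (is_derive_plus _ _ x _ _ (is_derive_mult _ _ x _ _ f1 g2 Rmult_comm)
                                        (is_derive_mult _ _ x _ _ f2 g1 Rmult_comm)) as H.
    assert (E : snd (df * g x + f x * dg)%C = plus (plus (mult (fst df) (snd (g x))) (mult (fst (f x)) (snd dg))) (plus (mult (snd df) (fst (g x))) (mult (snd (f x)) (fst dg)))).
    { destruct df, dg, (f x), (g x); simpl. unfold minus, plus, opp, mult; simpl. ring. }
    rewrite E. eapply is_derive_ext; [|exact H]. intros t; simpl. destruct (f t), (g t); reflexivity.
Qed.

Lemma Cder_plus (f g : R -> C) x df dg :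
  Cder f x df -> Cder g x dg -> Cder (fun y => f y + g y)%C x (df + dg)%C.
Proof. intros Hf Hg. apply (is_derive_plus f g x df dg Hf Hg). Qed.

Lemma Cder_opp (f : R -> C) x df :
  Cder f x df -> Cder (fun y => - f y)%C x (- df)%C.
Proof. intros Hf. apply (is_derive_opp f x df Hf). Qed.

Lemma Cder_minus (f g : R -> C) x df dg :
  Cder f x df -> Cder g x dg -> Cder (fun y => f y - g y)%C x (df - dg)%C.
Proof. intros Hf Hg. apply (is_derive_minus f g x df dg Hf Hg). Qed.

Lemma Cder_const (a : C) x : Cder (fun _ => a) x (RtoC 0).
Proof. apply (@is_derive_const R_AbsRing C_R_NormedModule a x). Qed.

Lemma Cder_eq (f : R -> C) x (l l' : C) : Cder f x l -> l = l' -> Cder f x l'.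
Proof. intros H <-; exact H. Qed.

Lemma Cder_ext (f g : R -> C) x l : (forall y, f y = g y) -> Cder f x l -> Cder g x l.
Proof. intros; eapply is_derive_ext; eauto. Qed.

End Mod_B1b.
Import Mod_B1b.

Module Mod_B2.
Open Scope R_scope.

Lemma Ccont_pair (f : R -> C) x :
  continuous (fun y => fst (f y)) x -> continuous (fun y => snd (f y)) x -> Ccont f x.
Proof.
  intros H1 H2. unfold continuous in *.
  apply filterlim_locally. intros eps.
  apply filterlim_locally with (eps := eps) in H1.
  apply filterlim_locally with (eps := eps) in H2.
  generalize (filter_and _ _ H1 H2). apply filter_imp. intros y [A B].
  split; assumption.
Qed.

Lemma Ccont_fst (f : R -> C) x : Ccont f x -> continuous (fun y => fst (f y)) x.
Proof.
  intros H. apply (continuous_comp f fst x H). destruct (f x). apply continuous_fst.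
Qed.

Lemma Ccont_snd (f : R -> C) x : Ccont f x -> continuous (fun y => snd (f y)) x.
Proof.
  intros H. apply (continuous_comp f snd x H). destruct (f x). apply continuous_snd.
Qed.


Lemma Rcont_mult (f g : R -> R) x : continuous f x -> continuous g x -> continuous (fun y => f y * g y) x.
Proof. intros Hf Hg. apply (@continuous_mult R_UniformSpace R_AbsRing f g x Hf Hg). Qed.
Lemma Rcont_plus (f g : R -> R) x : continuous f x -> continuous g x -> continuous (fun y => f y + g y) x.
Proof. intros Hf Hg. apply (@continuous_plus R_UniformSpace R_AbsRing R_NormedModule f g x Hf Hg). Qed.
Lemma Rcont_opp (f : R -> R) x : continuous f x -> continuous (fun y => - f y) x.
Proof. intros Hf. apply (@continuous_opp R_UniformSpace R_AbsRing R_NormedModule f x Hf). Qed.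
Lemma Rcont_minus (f g : R -> R) x : continuous f x -> continuous g x -> continuous (fun y => f y - g y) x.
Proof. intros Hf Hg. apply Rcont_plus; auto. apply Rcont_opp; auto. Qed.

Lemma Ccont_mult (f g : R -> C) x : Ccont f x -> Ccont g x -> Ccont (fun y => f y * g y)%C x.
Proof.
  intros Hf Hg. pose proof (Ccont_fst _ _ Hf). pose proof (Ccont_snd _ _ Hf).
  pose proof (Ccont_fst _ _ Hg). pose proof (Ccont_snd _ _ Hg).
  apply Ccont_pair; simpl.
  - apply Rcont_minus; apply Rcont_mult; auto.
  - apply Rcont_plus; apply Rcont_mult; auto.
Qed.

Lemma Ccont_plus (f g : R -> C) x : Ccont f x -> Ccont g x -> Ccont (fun y => f y + g y)%C x.
Proof.
  intros Hf Hg. pose proof (Ccont_fst _ _ Hf). pose proof (Ccont_snd _ _ Hf).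
  pose proof (Ccont_fst _ _ Hg). pose proof (Ccont_snd _ _ Hg).
  apply Ccont_pair; simpl; apply Rcont_plus; auto.
Qed.

Lemma Ccont_opp (f : R -> C) x : Ccont f x -> Ccont (fun y => - f y)%C x.
Proof.
  intros Hf. pose proof (Ccont_fst _ _ Hf). pose proof (Ccont_snd _ _ Hf).
  apply Ccont_pair; simpl; apply Rcont_opp; auto.
Qed.

Lemma Ccont_minus (f g : R -> C) x : Ccont f x -> Ccont g x -> Ccont (fun y => f y - g y)%C x.
Proof. intros Hf Hg. apply Ccont_plus; auto. apply Ccont_opp; auto. Qed.

Lemma Ccont_const (a : C) x : Ccont (fun _ => a) x.
Proof. apply continuous_const. Qed.

Lemma Ccont_conj (f : R -> C) x : Ccont f x -> Ccont (fun y => Cconj (f y)) x.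
Proof.
  intros H. apply Ccont_pair.
  - apply (Ccont_fst f x H).
  - simpl. apply (@continuous_opp R_UniformSpace R_AbsRing R_NormedModule (fun y => snd (f y))).
    apply (Ccont_snd f x H).
Qed.

Lemma Ccont_ext (f g : R -> C) x : (forall y, f y = g y) -> Ccont f x -> Ccont g x.
Proof. intros; eapply continuous_ext; eauto. Qed.

Lemma Cder_cont (f : R -> C) x l : Cder f x l -> Ccont f x.
Proof.
  intros H. apply Ccont_pair.
  - apply (@ex_derive_continuous R_AbsRing R_NormedModule). eexists. apply (Cder_fst f x l H).
  - apply (@ex_derive_continuous R_AbsRing R_NormedModule). eexists. apply (Cder_snd f x l H).
Qed.

Lemma cexp_add (a b : C) : cexp (a + b)%C = (cexp a * cexp b)%C.
Proof.
  destruct a as [a1 a2], b as [b1 b2]. unfold cexp. simpl.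
  rewrite exp_plus, cos_plus, sin_plus. apply injective_projections; simpl; ring.
Qed.

Lemma cexp_0 : cexp (RtoC 0) = RtoC 1.
Proof.
  unfold cexp. simpl. rewrite exp_0, cos_0, sin_0. apply injective_projections; simpl; ring.
Qed.

Lemma cexp_aff_cont (a b : C) w : Ccont (fun y => cexp (a * RtoC y + b)%C) w.
Proof.
  apply Ccont_pair; unfold cexp; simpl; apply (@ex_derive_continuous R_AbsRing R_NormedModule); auto_derive; auto.
Qed.

End Mod_B2.
Import Mod_B2.

Module Mod_B3.
Open Scope R_scope.

Definition clamp (a b z : R) : R := Rmax a (Rmin b z).

Lemma clamp_in a b z : a <= b -> a <= clamp a b z <= b.
Proof. intros. unfold clamp, Rmax, Rmin. repeat destruct Rle_dec; lra. Qed.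

Lemma clamp_id a b z : a <= z <= b -> clamp a b z = z.
Proof. intros. unfold clamp, Rmax, Rmin. repeat destruct Rle_dec; lra. Qed.

Lemma clamp_lip a b z w : a <= b -> Rabs (clamp a b z - clamp a b w) <= Rabs (z - w).
Proof.
  intros. unfold clamp, Rmax, Rmin.
  repeat destruct Rle_dec; unfold Rabs; repeat destruct Rcase_abs; lra.
Qed.

Lemma ball_C_of_Cmod (u v : C) (eps : posreal) : Cmod (v - u) < eps -> ball u eps v.
Proof.
  intros H. pose proof (Rmax_Cmod (v - u)%C) as H1.
  destruct u as [u1 u2], v as [v1 v2]. simpl in H1.
  split; simpl; unfold AbsRing_ball, minus, plus, opp, abs; simpl.
  - apply Rle_lt_trans with (2 := H). eapply Rle_trans; [|exact H1]. apply Rmax_l.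
  - apply Rle_lt_trans with (2 := H). eapply Rle_trans; [|exact H1]. apply Rmax_r.
Qed.

Lemma slice_x L T (F : R -> R -> C) t z :
  0 <= L -> 0 <= t <= T -> cont_on L T F -> Ccont (fun y => F (clamp 0 L y) t) z.
Proof.
  intros HL Ht HF. unfold continuous. apply filterlim_locally. intros eps.
  assert (Hz : inOmega L T (clamp 0 L z) t) by (split; [apply clamp_in; lra | lra]).
  destruct (HF _ _ Hz eps (cond_pos eps)) as [d [Hd Hd']].
  exists (mkposreal d Hd). intros y Hy.
  apply ball_C_of_Cmod. apply Hd'.
  - split; [apply clamp_in; lra | lra].
  - eapply Rle_lt_trans. apply clamp_lip; lra. exact Hy.
  - rewrite Rminus_eq_0, Rabs_R0. exact Hd.
Qed.

Lemma slice_t L T (F : R -> R -> C) x z :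
  0 <= T -> 0 <= x <= L -> cont_on L T F -> Ccont (fun s => F x (clamp 0 T s)) z.
Proof.
  intros HT Hx HF. unfold continuous. apply filterlim_locally. intros eps.
  assert (Hz : inOmega L T x (clamp 0 T z)) by (split; [lra | apply clamp_in; lra]).
  destruct (HF _ _ Hz eps (cond_pos eps)) as [d [Hd Hd']].
  exists (mkposreal d Hd). intros y Hy.
  apply ball_C_of_Cmod. apply Hd'.
  - split; [lra | apply clamp_in; lra].
  - rewrite Rminus_eq_0, Rabs_R0. exact Hd.
  - eapply Rle_lt_trans. apply clamp_lip; lra. exact Hy.
Qed.

Lemma clamp_cont a b z : a <= b -> continuous (clamp a b) z.
Proof.
  intros Hab. unfold continuous. apply filterlim_locally. intros eps.
  exists eps. intros y Hy. unfold ball in *; simpl in *; unfold AbsRing_ball, abs, minus, plus, opp in *; simpl in *.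
  eapply Rle_lt_trans; [apply clamp_lip; lra | exact Hy].
Qed.

Lemma is_RInt_Cmult (c : C) (g : R -> C) a b (I : C) :
  @is_RInt C_R_NormedModule g a b I -> @is_RInt C_R_NormedModule (fun y => c * g y)%C a b (c * I)%C.
Proof.
  intros H.
  pose proof (is_RInt_fct_extend_fst _ _ _ _ H) as H1.
  pose proof (is_RInt_fct_extend_snd _ _ _ _ H) as H2.
  destruct c as [c1 c2].
  replace (((c1, c2) * I)%C) with
    ((minus (scal c1 (fst I)) (scal c2 (snd I)), plus (scal c1 (snd I)) (scal c2 (fst I))) : C).
  2:{ destruct I; unfold minus, plus, opp, scal; simpl; unfold mult; simpl. apply injective_projections; simpl; ring. }
  apply (is_RInt_fct_extend_pair (U := R_NormedModule) (V := R_NormedModule)).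
  - eapply is_RInt_ext; [|apply (is_RInt_minus _ _ _ _ _ _ (is_RInt_scal _ _ _ c1 _ H1) (is_RInt_scal _ _ _ c2 _ H2))].
    intros x _. cbv beta. destruct (g x); simpl. unfold minus, plus, opp, scal; simpl; unfold mult; simpl. ring.
  - eapply is_RInt_ext; [|apply (is_RInt_plus _ _ _ _ _ _ (is_RInt_scal _ _ _ c1 _ H2) (is_RInt_scal _ _ _ c2 _ H1))].
    intros x _. cbv beta. destruct (g x); simpl. unfold minus, plus, opp, scal; simpl; unfold mult; simpl. ring.
Qed.

Lemma RIntC_Cmult (c : C) (g : R -> C) a b :
  @ex_RInt C_R_NormedModule g a b -> RIntC (fun y => c * g y)%C a b = (c * RIntC g a b)%C.
Proof.
  intros H. unfold RIntC. apply (@is_RInt_unique C_R_CompleteNormedModule). apply is_RInt_Cmult.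
  apply (RInt_correct (V := C_R_CompleteNormedModule)). exact H.
Qed.

End Mod_B3.
Import Mod_B3.

Module Mod_B4.
Open Scope R_scope.

Lemma locally_open_interval a b z : a < z < b -> locally z (fun w => a < w < b).
Proof.
  intros Hz. assert (He : 0 < Rmin (z - a) (b - z)) by (apply Rmin_glb_lt; lra).
  exists (mkposreal _ He). intros w Hw. simpl in Hw.
  unfold ball in Hw; simpl in Hw; unfold AbsRing_ball, abs, minus, plus, opp in Hw; simpl in Hw.
  pose proof (Rmin_l (z - a) (b - z)). pose proof (Rmin_r (z - a) (b - z)).
  unfold Rabs in Hw; destruct Rcase_abs in Hw; lra.
Qed.

Lemma const_1d_R (f : R -> R) a b :
  a < b -> (forall z, continuous (fun y => f (clamp a b y)) z) ->
  (forall y, a < y < b -> is_derive f y 0) -> forall y, a <= y <= b -> f y = f a.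
Proof.
  intros Hab Hc Hd y Hy.
  destruct (Req_dec y a) as [->|Hya]; [reflexivity|].
  destruct (MVT_gen (fun z => f (clamp a b z)) a y (fun _ => 0)) as [c [_ Hc']].
  - intros z Hz. rewrite Rmin_left in Hz by lra. rewrite Rmax_right in Hz by lra.
    eapply is_derive_ext_loc; [|apply (Hd z); lra].
    generalize (locally_open_interval a b z ltac:(lra)). apply filter_imp.
    intros w Hw. rewrite clamp_id; lra.
  - intros z _. apply continuity_pt_filterlim. apply Hc.
  - rewrite !clamp_id in Hc' by lra. lra.
Qed.

Lemma const_1d (h : R -> C) a b :
  a < b -> (forall z, Ccont (fun y => h (clamp a b y)) z) ->
  (forall y, a < y < b -> Cder h y (RtoC 0)) -> forall y, a <= y <= b -> h y = h a.
Proof.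
  intros Hab Hc Hd y Hy.
  assert (E1 : fst (h y) = fst (h a)).
  { apply (const_1d_R (fun z => fst (h z)) a b Hab); auto.
    - intros z. apply (Ccont_fst (fun y => h (clamp a b y))). apply Hc.
    - intros z Hz. apply (Cder_fst h z (RtoC 0)). auto. }
  assert (E2 : snd (h y) = snd (h a)).
  { apply (const_1d_R (fun z => snd (h z)) a b Hab); auto.
    - intros z. apply (Ccont_snd (fun y => h (clamp a b y))). apply Hc.
    - intros z Hz. apply (Cder_snd h z (RtoC 0)). auto. }
  apply injective_projections; auto.
Qed.

End Mod_B4.
Import Mod_B4.

Module Mod_B5.
Open Scope R_scope.
Local Open Scope C_scope.

Definition Ran (i : nat) : Prop := (1 <= i <= 3)%nat.
Definition adj (X : Mat) : Mat := fun i j => cofactor X j i.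
Definition trace (V : Mat) : C := V 1%nat 1%nat + V 2%nat 2%nat + V 3%nat 3%nat.
Definition det3 (X : Mat) : C := mmul X (adj X) 1%nat 1%nat.

Definition dminor (X Y : Mat) (i j : nat) : C :=
  let (r1, r2) := others i in let (c1, c2) := others j in
  Y r1 c1 * X r2 c2 + X r1 c1 * Y r2 c2 - (Y r1 c2 * X r2 c1 + X r1 c2 * Y r2 c1).
Definition dadj (X Y : Mat) : Mat :=
  fun i j => if Nat.even (j + i) then dminor X Y j i else - dminor X Y j i.

Definition MDer (F : R -> Mat) (x : R) (F' : Mat) : Prop :=
  forall i j, Ran i -> Ran j -> Cder (fun y => F y i j) x (F' i j).
Definition MCont (F : R -> Mat) (z : R) : Prop :=
  forall i j, Ran i -> Ran j -> Ccont (fun y => F y i j) z.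


Lemma Ran_cases i : Ran i -> i = 1%nat \/ i = 2%nat \/ i = 3%nat.
Proof. unfold Ran. lia. Qed.

Lemma others_ran i : Ran (fst (others i)) /\ Ran (snd (others i)).
Proof.
  unfold Ran. destruct i as [|[|[|i]]]; simpl; lia.
Qed.

Lemma MDer_mmul A B x A' B' :
  MDer A x A' -> MDer B x B' ->
  MDer (fun y => mmul (A y) (B y)) x (madd (mmul A' (B x)) (mmul (A x) B')).
Proof.
  intros HA HB i j Hi Hj. unfold mmul, sum3, madd.
  assert (R1 : Ran 1) by (unfold Ran; lia). assert (R2 : Ran 2) by (unfold Ran; lia).
  assert (R3 : Ran 3) by (unfold Ran; lia).
  pose proof (Cder_plus _ _ x _ _ (Cder_plus _ _ x _ _ (Cder_mult _ _ x _ _ (HA i 1%nat Hi R1) (HB 1%nat j R1 Hj))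
     (Cder_mult _ _ x _ _ (HA i 2%nat Hi R2) (HB 2%nat j R2 Hj))) (Cder_mult _ _ x _ _ (HA i 3%nat Hi R3) (HB 3%nat j R3 Hj))) as H.
  eapply Cder_eq; [exact H| cbv beta; ring].
Qed.

Lemma MCont_mmul A B z : MCont A z -> MCont B z -> MCont (fun y => mmul (A y) (B y)) z.
Proof.
  intros HA HB i j Hi Hj. unfold mmul, sum3.
  assert (R1 : Ran 1) by (unfold Ran; lia). assert (R2 : Ran 2) by (unfold Ran; lia).
  assert (R3 : Ran 3) by (unfold Ran; lia).
  apply Ccont_plus; [apply Ccont_plus|]; apply Ccont_mult; auto.
Qed.

Lemma MDer_adj A x A' : MDer A x A' -> MDer (fun y => adj (A y)) x (dadj (A x) A').
Proof.
  intros HA i j Hi Hj. unfold adj, cofactor, dadj, minor, dminor.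
  pose proof (others_ran i) as [Hi1 Hi2]. pose proof (others_ran j) as [Hj1 Hj2].
  destruct (others i) as [c1 c2]. destruct (others j) as [r1 r2]. simpl in *.
  destruct (Nat.even (j + i)).
  - apply Cder_minus; apply Cder_mult; auto.
  - apply Cder_opp. apply Cder_minus; apply Cder_mult; auto.
Qed.

Lemma MCont_adj A z : MCont A z -> MCont (fun y => adj (A y)) z.
Proof.
  intros HA i j Hi Hj. unfold adj, cofactor, minor.
  pose proof (others_ran i) as [Hi1 Hi2]. pose proof (others_ran j) as [Hj1 Hj2].
  destruct (others i) as [c1 c2]. destruct (others j) as [r1 r2]. simpl in *.
  destruct (Nat.even (j + i)).
  - apply Ccont_minus; apply Ccont_mult; auto.
  - apply Ccont_opp. apply Ccont_minus; apply Ccont_mult; auto.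
Qed.

Lemma deriv_P_identity (X Y V : Mat) i j : Ran i -> Ran j ->
  madd (mmul (dadj X (mmul V X)) Y) (mmul (adj X) (mmul V Y)) i j
  = trace V * mmul (adj X) Y i j.
Proof.
  intros Hi Hj.
  destruct (Ran_cases i Hi) as [E1|[E1|E1]]; destruct (Ran_cases j Hj) as [E2|[E2|E2]]; subst i j;
  unfold madd, mmul, sum3, dadj, adj, cofactor, dminor, minor, trace; simpl; ring.
Qed.

Lemma deriv_det_identity (X V : Mat) :
  madd (mmul (mmul V X) (adj X)) (mmul X (dadj X (mmul V X))) 1%nat 1%nat
  = trace V * det3 X.
Proof.
  unfold det3, madd, mmul, sum3, dadj, adj, cofactor, dminor, minor, trace; simpl; ring.
Qed.

End Mod_B5.
Import Mod_B5.

Module Mod_B6.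
Open Scope R_scope.

Definition Sol (L T : R) (W1 W2 : R -> R -> Mat) (N : R -> R -> Mat) : Prop :=
  (forall t x, 0 <= t <= T -> 0 < x < L -> MDer (fun y => N y t) x (mmul (W1 x t) (N x t))) /\
  (forall x t, 0 <= x <= L -> 0 < t < T -> MDer (fun s => N x s) t (mmul (W2 x t) (N x t))) /\
  (forall t z, 0 <= t <= T -> MCont (fun y => N (clamp 0 L y) t) z) /\
  (forall x z, 0 <= x <= L -> MCont (fun s => N x (clamp 0 T s)) z).

Lemma Rran1 : Ran 1. Proof. unfold Ran; lia. Qed.

Section Const.
Variables (L T : R) (W1 W2 : R -> R -> Mat).
Hypothesis HL : 0 < L.
Hypothesis HT : 0 < T.
Hypothesis Htr1 : forall x t, 0 <= x <= L -> 0 <= t <= T -> trace (W1 x t) = RtoC 0.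
Hypothesis Htr2 : forall x t, 0 <= x <= L -> 0 <= t <= T -> trace (W2 x t) = RtoC 0.

Lemma P_const (N2 N : R -> R -> Mat) : Sol L T W1 W2 N2 -> Sol L T W1 W2 N ->
  forall x t i j, 0 <= x <= L -> 0 <= t <= T -> Ran i -> Ran j ->
  mmul (adj (N2 x t)) (N x t) i j = mmul (adj (N2 0 0)) (N 0 0) i j.
Proof.
  intros [A1 [A2 [A3 A4]]] [B1 [B2 [B3 B4]]] x t i j Hx Ht Hi Hj.
  transitivity (mmul (adj (N2 0 t)) (N 0 t) i j).
  - apply (const_1d (fun y => mmul (adj (N2 y t)) (N y t) i j) 0 L HL); auto.
    + intros z. apply (MCont_mmul (fun y => adj (N2 (clamp 0 L y) t)) (fun y => N (clamp 0 L y) t)); auto.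
      apply MCont_adj. auto.
    + intros y Hy. eapply Cder_eq.
      * apply (MDer_mmul (fun y => adj (N2 y t)) (fun y => N y t)); auto.
        apply MDer_adj. apply A1; auto.
      * rewrite deriv_P_identity by auto. rewrite Htr1 by lra. ring.
  - apply (const_1d (fun s => mmul (adj (N2 0 s)) (N 0 s) i j) 0 T HT); [| |lra].
    + intros z. apply (MCont_mmul (fun s => adj (N2 0 (clamp 0 T s))) (fun s => N 0 (clamp 0 T s))); auto.
      apply MCont_adj. apply A4. lra. apply B4. lra.
    + intros y Hy. eapply Cder_eq.
      * apply (MDer_mmul (fun s => adj (N2 0 s)) (fun s => N 0 s)); auto.
        apply MDer_adj. apply A2; lra. apply B2; lra.
      * rewrite deriv_P_identity by auto. rewrite Htr2 by lra. ring.
Qed.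

Lemma det_const (N2 : R -> R -> Mat) : Sol L T W1 W2 N2 ->
  forall x t, 0 <= x <= L -> 0 <= t <= T -> det3 (N2 x t) = det3 (N2 0 0).
Proof.
  intros [A1 [A2 [A3 A4]]] x t Hx Ht. unfold det3.
  pose proof Rran1 as R1.
  transitivity (mmul (N2 0 t) (adj (N2 0 t)) 1%nat 1%nat).
  - apply (const_1d (fun y => mmul (N2 y t) (adj (N2 y t)) 1%nat 1%nat) 0 L HL); auto.
    + intros z. apply (MCont_mmul (fun y => N2 (clamp 0 L y) t) (fun y => adj (N2 (clamp 0 L y) t))); auto.
      apply MCont_adj. auto.
    + intros y Hy. eapply Cder_eq.
      * apply (MDer_mmul (fun y => N2 y t) (fun y => adj (N2 y t))); auto.
        apply MDer_adj. apply A1; auto.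
      * rewrite deriv_det_identity. rewrite Htr1 by lra. ring.
  - apply (const_1d (fun s => mmul (N2 0 s) (adj (N2 0 s)) 1%nat 1%nat) 0 T HT); [| |lra].
    + intros z. apply (MCont_mmul (fun s => N2 0 (clamp 0 T s)) (fun s => adj (N2 0 (clamp 0 T s)))); auto.
      apply A4; lra. apply MCont_adj. apply A4. lra.
    + intros y Hy. eapply Cder_eq.
      * apply (MDer_mmul (fun s => N2 0 s) (fun s => adj (N2 0 s))); auto.
        apply A2; lra. apply MDer_adj. apply A2; lra.
      * rewrite deriv_det_identity. rewrite Htr2 by lra. ring.
Qed.
End Const.

End Mod_B6.
Import Mod_B6.

Module Mod_B7.
Open Scope R_scope.
Local Open Scope C_scope.

Definition fph (k : C) (x t : R) : C := Ci * k * RtoC x + 2 * Ci * k * k * RtoC t.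
Definition dL (i j : nat) : C := Lam i - Lam j.
Definition ex (k : C) (x t : R) (i j : nat) : C := cexp (- (fph k x t * dL i j)).
Definition NN (k : C) (M : R -> R -> Mat) (x t : R) : Mat := fun i j => ex k x t i j * M x t i j.
Definition Vt1 sigma k Q1 Q2 (x t : R) : Mat := fun i l => ex k x t i l * V1 sigma Q1 Q2 x t i l.
Definition Vt2 sigma k Q1 Q2 (x t : R) : Mat := fun i l => ex k x t i l * V2 sigma k Q1 Q2 x t i l.

Lemma theta_fph k x t x' t' : theta k x t x' t' = fph k x t - fph k x' t'.
Proof. unfold theta, fph. rewrite !RtoC_minus. ring. Qed.

Lemma hatexp_split k x t x' t' X i j :
  hatexp (theta k x t x' t') X i j = cexp (fph k x t * dL i j) * (ex k x' t' i j * X i j).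
Proof.
  unfold hatexp, ex, dL. rewrite theta_fph. rewrite Cmult_assoc, <- cexp_add. f_equal. f_equal. ring.
Qed.

Lemma ex_mult k x t i l j : ex k x t i l * ex k x t l j = ex k x t i j.
Proof. unfold ex, dL. rewrite <- cexp_add. f_equal. ring. Qed.

Lemma ex_inv k x t i j : ex k x t i j * cexp (fph k x t * dL i j) = 1.
Proof. unfold ex. rewrite <- cexp_add. replace (- (fph k x t * dL i j) + fph k x t * dL i j) with (RtoC 0) by ring. apply cexp_0. Qed.

Lemma ex_idm k x t i j : ex k x t i j * idm i j = idm i j.
Proof.
  unfold idm. destruct (Nat.eqb_spec i j) as [->|].
  - unfold ex, dL. replace (- (fph k x t * (Lam j - Lam j))) with (RtoC 0) by ring. rewrite cexp_0. ring.
  - ring.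
Qed.

Lemma G_identity k (V M : Mat) x t i j :
  ex k x t i j * mmul V M i j = mmul (fun i l => ex k x t i l * V i l) (fun l j => ex k x t l j * M l j) i j.
Proof.
  unfold mmul, sum3.
  transitivity ((ex k x t i 1%nat * ex k x t 1%nat j) * V i 1%nat * M 1%nat j
     + (ex k x t i 2%nat * ex k x t 2%nat j) * V i 2%nat * M 2%nat j
     + (ex k x t i 3%nat * ex k x t 3%nat j) * V i 3%nat * M 3%nat j).
  - rewrite !ex_mult. ring.
  - ring.
Qed.

Lemma ex_00 k i j : ex k 0 0 i j = 1.
Proof. unfold ex, fph. replace (- ((Ci * k * RtoC 0 + 2 * Ci * k * k * RtoC 0) * dL i j)) with (RtoC 0) by ring. apply cexp_0. Qed.

Lemma V1m_cont sigma (q1 q2 : R -> C) z i j :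
  Ccont q1 z -> Ccont q2 z -> Ccont (fun y => V1m sigma (q1 y) (q2 y) i j) z.
Proof.
  intros H1 H2. unfold V1m, mk3.
  destruct i as [|[|[|[|i]]]]; destruct j as [|[|[|[|j]]]];
  try apply Ccont_const; auto;
  apply Ccont_mult; try apply Ccont_const; apply Ccont_conj; auto.
Qed.

Definition V2form sigma k (q1 q2 p1 p2 : C) (i j : nat) : C :=
  2 * k * V1m sigma q1 q2 i j + Ci * Lam i * (mmul (V1m sigma q1 q2) (V1m sigma q1 q2) i j - V1m sigma p1 p2 i j).

Lemma V2_form sigma k Q1 Q2 x t i j :
  V2 sigma k Q1 Q2 x t i j = V2form sigma k (Q1 0%nat 0%nat x t) (Q2 0%nat 0%nat x t) (Q1 1%nat 0%nat x t) (Q2 1%nat 0%nat x t) i j.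
Proof. reflexivity. Qed.

Lemma V2form_cont sigma k (q1 q2 p1 p2 : R -> C) z i j :
  Ccont q1 z -> Ccont q2 z -> Ccont p1 z -> Ccont p2 z ->
  Ccont (fun y => V2form sigma k (q1 y) (q2 y) (p1 y) (p2 y) i j) z.
Proof.
  intros H1 H2 H3 H4. unfold V2form.
  apply Ccont_plus.
  - apply Ccont_mult. apply Ccont_const. apply V1m_cont; auto.
  - apply Ccont_mult. apply Ccont_const. apply Ccont_minus; [|apply V1m_cont; auto].
    unfold mmul, sum3. apply Ccont_plus; [apply Ccont_plus|]; apply Ccont_mult; apply V1m_cont; auto.
Qed.

Lemma ex_cont_x k L t i j z : 0 <= L -> Ccont (fun y => ex k (clamp 0 L y) t i j) z.
Proof.
  intros HL.
  apply (continuous_comp (clamp 0 L) (fun w => ex k w t i j) z (clamp_cont 0 L z HL)).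
  eapply Ccont_ext; [|apply (cexp_aff_cont (- (Ci * k * dL i j)) (- (2 * Ci * k * k * RtoC t * dL i j)))].
  intros y. unfold ex, fph. f_equal. ring.
Qed.

Lemma ex_cont_t k T x i j z : 0 <= T -> Ccont (fun s => ex k x (clamp 0 T s) i j) z.
Proof.
  intros HT.
  apply (continuous_comp (clamp 0 T) (fun w => ex k x w i j) z (clamp_cont 0 T z HT)).
  eapply Ccont_ext; [|apply (cexp_aff_cont (- (2 * Ci * k * k * dL i j)) (- (Ci * k * RtoC x * dL i j)))].
  intros y. unfold ex, fph. f_equal. ring.
Qed.

End Mod_B7.
Import Mod_B7.

Module Mod_B7b.
Open Scope R_scope.

Lemma minmax_in lo hi a b z : lo <= a <= hi -> lo <= b <= hi -> Rmin a b < z < Rmax a b -> lo <= z <= hi.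
Proof. intros. unfold Rmin, Rmax in *. destruct Rle_dec; lra. Qed.

Lemma exRInt_cont (Fc : R -> C) a b : (forall z, Ccont Fc z) -> @ex_RInt C_R_NormedModule Fc a b.
Proof. intros H. apply (@ex_RInt_continuous C_R_CompleteNormedModule). intros z _. apply H. Qed.

Lemma RInt_helper (e : C) (F Fc : R -> C) a b lo hi :
  (forall z, Ccont Fc z) -> lo <= a <= hi -> lo <= b <= hi ->
  (forall u, lo <= u <= hi -> F u = Fc u) ->
  RIntC (fun u => e * F u)%C a b = (e * RIntC Fc a b)%C.
Proof.
  intros Hc Ha Hb HF.
  assert (E1 : @ex_RInt C_R_NormedModule Fc a b) by (apply exRInt_cont; auto).
  assert (E2 : @ex_RInt C_R_NormedModule F a b).
  { apply (ex_RInt_ext Fc); [intros u Hu; symmetry; apply HF; apply (minmax_in lo hi a b u Ha Hb Hu) | exact E1]. }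
  rewrite RIntC_Cmult by exact E2. f_equal. unfold RIntC. apply (@RInt_ext C_R_CompleteNormedModule).
  intros u Hu. apply HF. apply (minmax_in lo hi a b u Ha Hb Hu).
Qed.

End Mod_B7b.
Import Mod_B7b.

Module Mod_B8.
Open Scope R_scope.
Local Open Scope C_scope.

Section Slices.
Variables (sigma L T : R) (k : C) (Q1 Q2 : nat -> nat -> R -> R -> C).
Hypothesis HL : (0 < L)%R.
Hypothesis HT : (0 < T)%R.
Hypothesis HQ1 : cont_on L T (Q1 0%nat 0%nat).
Hypothesis HQ2 : cont_on L T (Q2 0%nat 0%nat).
Hypothesis HQ1x : cont_on L T (Q1 1%nat 0%nat).
Hypothesis HQ2x : cont_on L T (Q2 1%nat 0%nat).

Lemma NN_cont_x (M : R -> R -> Mat) t z : (0 <= t <= T)%R -> mcont_on L T M ->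
  MCont (fun y => NN k M (clamp 0 L y) t) z.
Proof.
  intros Ht HM i j Hi Hj. unfold NN. apply Ccont_mult.
  - apply ex_cont_x; lra.
  - apply (slice_x L T (fun x t => M x t i j)); auto; lra.
Qed.

Lemma NN_cont_t (M : R -> R -> Mat) x z : (0 <= x <= L)%R -> mcont_on L T M ->
  MCont (fun s => NN k M x (clamp 0 T s)) z.
Proof.
  intros Hx HM i j Hi Hj. unfold NN. apply Ccont_mult.
  - apply ex_cont_t; lra.
  - apply (slice_t L T (fun x t => M x t i j)); auto; lra.
Qed.

Lemma Vt1_cont_x t z : (0 <= t <= T)%R -> MCont (fun y => Vt1 sigma k Q1 Q2 (clamp 0 L y) t) z.
Proof.
  intros Ht i j Hi Hj. unfold Vt1. apply Ccont_mult.
  - apply ex_cont_x; lra.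
  - unfold V1. apply V1m_cont; apply (slice_x L T); auto; lra.
Qed.

Lemma Vt2_cont_t x z : (0 <= x <= L)%R -> MCont (fun s => Vt2 sigma k Q1 Q2 x (clamp 0 T s)) z.
Proof.
  intros Hx i j Hi Hj. unfold Vt2. apply Ccont_mult.
  - apply ex_cont_t; lra.
  - eapply Ccont_ext. { intros y. symmetry. apply V2_form. }
    apply V2form_cont; apply (slice_t L T); auto; lra.
Qed.

Lemma ex_diag k' x t i : ex k' x t i i = 1.
Proof. unfold ex, dL. replace (- (fph k' x t * (Lam i - Lam i))) with (RtoC 0) by ring. apply cexp_0. Qed.

Lemma trace_Vt1 x t : trace (Vt1 sigma k Q1 Q2 x t) = RtoC 0.
Proof. unfold trace, Vt1, V1, V1m, mk3. simpl. ring. Qed.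

Lemma trace_Vt2 x t : trace (Vt2 sigma k Q1 Q2 x t) = RtoC 0.
Proof.
  unfold trace, Vt2. rewrite !V2_form. unfold V2form, V1m, mk3, mmul, sum3, Lam. simpl.
  rewrite !ex_diag. ring.
Qed.

Notation V1t := (Vt1 sigma k Q1 Q2).
Notation V2t := (Vt2 sigma k Q1 Q2).

Lemma rep_x start M : int_eq sigma L T k Q1 Q2 start M ->
  (forall i j, inOmega L T (fst (start i j)) (snd (start i j))) ->
  forall t i j, (0 <= t <= T)%R -> Ran i -> Ran j -> forall y, (0 <= y <= L)%R ->
  NN k M y t i j = idm i j
    + RIntC (fun s' => mmul (V2t (fst (start i j)) (clamp 0 T s')) (NN k M (fst (start i j)) (clamp 0 T s')) i j) (snd (start i j)) t
    + RIntC (fun y' => mmul (V1t (clamp 0 L y') t) (NN k M (clamp 0 L y') t) i j) (fst (start i j)) y.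
Proof.
  intros [HM Hint] Hs t i j Ht Hi Hj y Hy.
  destruct (Hs i j) as [Hx0 Ht0].
  pose proof (Hint y t (conj Hy Ht) i j Hi Hj) as E. cbv zeta in E. destruct E as [E1 _].
  set (x0 := fst (start i j)) in *. set (t0 := snd (start i j)) in *.
  assert (I2 : (fun t' => hatexp (theta k y t x0 t') (mmul (V2 sigma k Q1 Q2 x0 t') (M x0 t')) i j)
             = (fun t' => cexp (fph k y t * dL i j) * mmul (V2t x0 t') (NN k M x0 t') i j)).
  { apply functional_extensionality; intros t'. rewrite hatexp_split. f_equal. unfold Vt2, NN. apply G_identity. }
  assert (I1 : (fun x' => hatexp (theta k y t x' t) (mmul (V1 sigma Q1 Q2 x' t) (M x' t)) i j)
             = (fun x' => cexp (fph k y t * dL i j) * mmul (V1t x' t) (NN k M x' t) i j)).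
  { apply functional_extensionality; intros x'. rewrite hatexp_split. f_equal. unfold Vt1, NN. apply G_identity. }
  rewrite I1, I2 in E1.
  rewrite (RInt_helper _ _ (fun s' => mmul (V2t x0 (clamp 0 T s')) (NN k M x0 (clamp 0 T s')) i j) t0 t 0 T) in E1.
  2:{ intros z. apply (MCont_mmul (fun s => V2t x0 (clamp 0 T s)) (fun s => NN k M x0 (clamp 0 T s))); auto.
      apply Vt2_cont_t; auto. apply NN_cont_t; auto. }
  2,3: lra.
  2:{ intros u Hu. rewrite clamp_id; auto. }
  rewrite (RInt_helper _ _ (fun y' => mmul (V1t (clamp 0 L y') t) (NN k M (clamp 0 L y') t) i j) x0 y 0 L) in E1.
  2:{ intros z. apply (MCont_mmul (fun y => V1t (clamp 0 L y) t) (fun y => NN k M (clamp 0 L y) t)); auto.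
      apply Vt1_cont_x; auto. apply NN_cont_x; auto. }
  2,3: lra.
  2:{ intros u Hu. rewrite clamp_id; auto. }
  unfold NN at 1. rewrite E1.
  set (e := cexp (fph k y t * dL i j)).
  set (A := RIntC _ t0 t). set (B := RIntC _ x0 y).
  transitivity (ex k y t i j * idm i j + (ex k y t i j * e) * A + (ex k y t i j * e) * B); [ring|].
  unfold e. rewrite ex_idm, ex_inv. ring.
Qed.

Lemma rep_t start M : int_eq sigma L T k Q1 Q2 start M ->
  (forall i j, inOmega L T (fst (start i j)) (snd (start i j))) ->
  forall x i j, (0 <= x <= L)%R -> Ran i -> Ran j -> forall s, (0 <= s <= T)%R ->
  NN k M x s i j = idm i j
    + RIntC (fun y' => mmul (V1t (clamp 0 L y') (snd (start i j))) (NN k M (clamp 0 L y') (snd (start i j))) i j) (fst (start i j)) x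
    + RIntC (fun s' => mmul (V2t x (clamp 0 T s')) (NN k M x (clamp 0 T s')) i j) (snd (start i j)) s.
Proof.
  intros [HM Hint] Hs x i j Hx Hi Hj s Hs'.
  destruct (Hs i j) as [Hx0 Ht0].
  pose proof (Hint x s (conj Hx Hs') i j Hi Hj) as E. cbv zeta in E. destruct E as [_ E1].
  set (x0 := fst (start i j)) in *. set (t0 := snd (start i j)) in *.
  assert (I2 : (fun t' => hatexp (theta k x s x t') (mmul (V2 sigma k Q1 Q2 x t') (M x t')) i j)
             = (fun t' => cexp (fph k x s * dL i j) * mmul (V2t x t') (NN k M x t') i j)).
  { apply functional_extensionality; intros t'. rewrite hatexp_split. f_equal. unfold Vt2, NN. apply G_identity. }
  assert (I1 : (fun x' => hatexp (theta k x s x' t0) (mmul (V1 sigma Q1 Q2 x' t0) (M x' t0)) i j)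
             = (fun x' => cexp (fph k x s * dL i j) * mmul (V1t x' t0) (NN k M x' t0) i j)).
  { apply functional_extensionality; intros x'. rewrite hatexp_split. f_equal. unfold Vt1, NN. apply G_identity. }
  rewrite I1, I2 in E1.
  rewrite (RInt_helper _ _ (fun s' => mmul (V2t x (clamp 0 T s')) (NN k M x (clamp 0 T s')) i j) t0 s 0 T) in E1.
  2:{ intros z. apply (MCont_mmul (fun s => V2t x (clamp 0 T s)) (fun s => NN k M x (clamp 0 T s))); auto.
      apply Vt2_cont_t; auto. apply NN_cont_t; auto. }
  2,3: lra.
  2:{ intros u Hu. rewrite clamp_id; auto. }
  rewrite (RInt_helper _ _ (fun y' => mmul (V1t (clamp 0 L y') t0) (NN k M (clamp 0 L y') t0) i j) x0 x 0 L) in E1.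
  2:{ intros z. apply (MCont_mmul (fun y => V1t (clamp 0 L y) t0) (fun y => NN k M (clamp 0 L y) t0)); auto.
      apply Vt1_cont_x; auto. apply NN_cont_x; auto. }
  2,3: lra.
  2:{ intros u Hu. rewrite clamp_id; auto. }
  unfold NN at 1. rewrite E1.
  set (e := cexp (fph k x s * dL i j)).
  set (A := RIntC _ x0 x). set (B := RIntC _ t0 s).
  transitivity (ex k x s i j * idm i j + (ex k x s i j * e) * A + (ex k x s i j * e) * B); [ring|].
  unfold e. rewrite ex_idm, ex_inv. ring.
Qed.

Lemma Sol_of_int_eq start M : int_eq sigma L T k Q1 Q2 start M ->
  (forall i j, inOmega L T (fst (start i j)) (snd (start i j))) ->
  Sol L T V1t V2t (NN k M).
Proof.
  intros Hie Hs. pose proof Hie as [HM _]. split; [|split; [|split]].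
  - intros t x Ht Hx i j Hi Hj.
    destruct (Hs i j) as [Hx0 Ht0].
    set (G1c := fun y' => mmul (V1t (clamp 0 L y') t) (NN k M (clamp 0 L y') t) i j).
    assert (HG : forall z, Ccont G1c z).
    { intros z. unfold G1c. apply (MCont_mmul (fun y => V1t (clamp 0 L y) t) (fun y => NN k M (clamp 0 L y) t) z
        (Vt1_cont_x t z Ht) (NN_cont_x M t z Ht HM) i j Hi Hj). }
    set (K := idm i j + RIntC (fun s' => mmul (V2t (fst (start i j)) (clamp 0 T s')) (NN k M (fst (start i j)) (clamp 0 T s')) i j) (snd (start i j)) t).
    apply (is_derive_ext_loc (fun y => K + RIntC G1c (fst (start i j)) y)).
    + generalize (locally_open_interval 0 L x Hx). apply filter_imp. intros y Hy.
      symmetry. unfold K, G1c. apply (rep_x start M Hie Hs t i j Ht Hi Hj y). lra.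
    + eapply Cder_eq.
      * apply Cder_plus. apply Cder_const.
        apply (@is_derive_RInt C_R_NormedModule G1c (fun b => RIntC G1c (fst (start i j)) b) (fst (start i j)) x).
        -- apply filter_forall. intros b. apply (RInt_correct (V := C_R_CompleteNormedModule)). apply exRInt_cont. auto.
        -- apply HG.
      * unfold G1c. rewrite clamp_id by lra. ring.
  - intros x t Hx Ht i j Hi Hj.
    destruct (Hs i j) as [Hx0 Ht0].
    set (G2c := fun s' => mmul (V2t x (clamp 0 T s')) (NN k M x (clamp 0 T s')) i j).
    assert (HG : forall z, Ccont G2c z).
    { intros z. unfold G2c. apply (MCont_mmul (fun s => V2t x (clamp 0 T s)) (fun s => NN k M x (clamp 0 T s)) z
        (Vt2_cont_t x z Hx) (NN_cont_t M x z Hx HM) i j Hi Hj). }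
    set (K := idm i j + RIntC (fun y' => mmul (V1t (clamp 0 L y') (snd (start i j))) (NN k M (clamp 0 L y') (snd (start i j))) i j) (fst (start i j)) x).
    apply (is_derive_ext_loc (fun s => K + RIntC G2c (snd (start i j)) s)).
    + generalize (locally_open_interval 0 T t Ht). apply filter_imp. intros s Hs'.
      symmetry. unfold K, G2c. apply (rep_t start M Hie Hs x i j Hx Hi Hj s). lra.
    + eapply Cder_eq.
      * apply Cder_plus. apply Cder_const.
        apply (@is_derive_RInt C_R_NormedModule G2c (fun b => RIntC G2c (snd (start i j)) b) (snd (start i j)) t).
        -- apply filter_forall. intros b. apply (RInt_correct (V := C_R_CompleteNormedModule)). apply exRInt_cont. auto.
        -- apply HG.
      * unfold G2c. rewrite clamp_id by lra. ring.
  - intros t z Ht. apply NN_cont_x; auto.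
  - intros x z Hx. apply NN_cont_t; auto.
Qed.

Lemma start_val start M : int_eq sigma L T k Q1 Q2 start M ->
  (forall i j, inOmega L T (fst (start i j)) (snd (start i j))) ->
  forall i j, Ran i -> Ran j -> M (fst (start i j)) (snd (start i j)) i j = idm i j.
Proof.
  intros [HM Hint] Hs i j Hi Hj.
  pose proof (Hint _ _ (Hs i j) i j Hi Hj) as E. cbv zeta in E. destruct E as [E1 _].
  rewrite E1. unfold RIntC. rewrite !RInt_point.
  change (@zero (CompleteNormedModule.AbelianMonoid R_AbsRing C_R_CompleteNormedModule)) with (RtoC 0).
  ring.
Qed.

End Slices.

End Mod_B8.
Import Mod_B8.

Module Mod_B10.
Open Scope R_scope.
Local Open Scope C_scope.

Ltac ran := unfold Ran in *; lia.

Lemma lin_solve (a y b : C) : a <> RtoC 0 -> a * y + b = RtoC 0 -> y = - b / a.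
Proof.
  intros Ha H. assert (E : a * y = - b).
  { transitivity ((a * y + b) - b); [ring|]. rewrite H. ring. }
  rewrite <- E. field. auto.
Qed.

Ltac meq_cases := let i := fresh "i" in let j := fresh "j" in let Hi := fresh in let Hj := fresh in
  intros i j Hi Hj; destruct (Ran_cases i Hi) as [E1|[E1|E1]]; destruct (Ran_cases j Hj) as [E2|[E2|E2]];
  subst i j; unfold mk3.

Lemma alg_n4 (A C Y : Mat) :
  A 1%nat 1%nat <> RtoC 0 -> C 1%nat 2%nat = RtoC 0 -> C 1%nat 3%nat = RtoC 0 ->
  (forall i j, Ran i -> Ran j -> C i j = mmul A Y i j) ->
  Y 1%nat 1%nat = 1 -> Y 2%nat 1%nat = 0 -> Y 3%nat 1%nat = 0 -> Y 2%nat 2%nat = 1 ->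
  Y 3%nat 2%nat = 0 -> Y 2%nat 3%nat = 0 -> Y 3%nat 3%nat = 1 ->
  meq C (mk3 (A 1%nat 1%nat) (RtoC 0) (RtoC 0)
             (A 2%nat 1%nat) (minor A 3 3 / A 1%nat 1%nat) (minor A 3 2 / A 1%nat 1%nat)
             (A 3%nat 1%nat) (minor A 2 3 / A 1%nat 1%nat) (minor A 2 2 / A 1%nat 1%nat)).
Proof.
  intros H0 C12 C13 HC y11 y21 y31 y22 y32 y23 y33.
  assert (E12 := HC 1%nat 2%nat ltac:(ran) ltac:(ran)).
  assert (E13 := HC 1%nat 3%nat ltac:(ran) ltac:(ran)).
  unfold mmul, sum3 in E12, E13. rewrite C12, y22, y32 in E12. rewrite C13, y23, y33 in E13.
  assert (a : Y 1%nat 2%nat = - A 1%nat 2%nat / A 1%nat 1%nat).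
  { apply lin_solve; auto. rewrite E12. ring. }
  assert (b : Y 1%nat 3%nat = - A 1%nat 3%nat / A 1%nat 1%nat).
  { apply lin_solve; auto. rewrite E13. ring. }
  meq_cases; try assumption; rewrite HC by ran; unfold mmul, sum3;
  rewrite ?y11, ?y21, ?y31, ?y22, ?y32, ?y23, ?y33, ?a, ?b; unfold minor; simpl; field; auto.
Qed.

Lemma alg_n1 (A C Y : Mat) :
  det3 A = 1 -> minor A 1 1 <> RtoC 0 -> C 2%nat 1%nat = RtoC 0 -> C 3%nat 1%nat = RtoC 0 ->
  (forall i j, Ran i -> Ran j -> C i j = mmul A Y i j) ->
  Y 1%nat 1%nat = 1 -> Y 1%nat 2%nat = 0 -> Y 1%nat 3%nat = 0 -> Y 2%nat 2%nat = 1 ->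
  Y 3%nat 2%nat = 0 -> Y 2%nat 3%nat = 0 -> Y 3%nat 3%nat = 1 ->
  meq C (mk3 (RtoC 1 / minor A 1 1) (A 1%nat 2%nat) (A 1%nat 3%nat)
             (RtoC 0) (A 2%nat 2%nat) (A 2%nat 3%nat)
             (RtoC 0) (A 3%nat 2%nat) (A 3%nat 3%nat)).
Proof.
  intros Hdet H0 C21 C31 HC y11 y12 y13 y22 y32 y23 y33.
  assert (E21 := HC 2%nat 1%nat ltac:(ran) ltac:(ran)).
  assert (E31 := HC 3%nat 1%nat ltac:(ran) ltac:(ran)).
  unfold mmul, sum3 in E21, E31. rewrite C21, y11 in E21. rewrite C31, y11 in E31.
  assert (K : (A 1%nat 1%nat * 1 + A 1%nat 2%nat * Y 2%nat 1%nat + A 1%nat 3%nat * Y 3%nat 1%nat) * minor A 1 1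
     = det3 A + (A 1%nat 2%nat * A 3%nat 3%nat - A 1%nat 3%nat * A 3%nat 2%nat) *
                (A 2%nat 1%nat * 1 + A 2%nat 2%nat * Y 2%nat 1%nat + A 2%nat 3%nat * Y 3%nat 1%nat)
       + (A 1%nat 3%nat * A 2%nat 2%nat - A 1%nat 2%nat * A 2%nat 3%nat) *
                (A 3%nat 1%nat * 1 + A 3%nat 2%nat * Y 2%nat 1%nat + A 3%nat 3%nat * Y 3%nat 1%nat)).
  { unfold det3, mmul, sum3, adj, cofactor, minor; simpl; ring. }
  rewrite <- E21, <- E31, Hdet in K.
  meq_cases; try assumption; rewrite HC by ran; unfold mmul, sum3;
  rewrite ?y11, ?y12, ?y13, ?y22, ?y32, ?y23, ?y33; try ring.
  transitivity ((A 1%nat 1%nat * 1 + A 1%nat 2%nat * Y 2%nat 1%nat + A 1%nat 3%nat * Y 3%nat 1%nat) * minor A 1 1 / minor A 1 1).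
  { field. auto. }
  rewrite K. field. auto.
Qed.

Lemma alg_n2 (s S C Y Z : Mat) :
  det3 s = 1 -> Defs.d2 s S <> RtoC 0 ->
  (forall i j, Ran i -> Ran j -> C i j = mmul s Y i j) ->
  (forall i j, Ran i -> Ran j -> C i j = mmul S Z i j) ->
  Y 1%nat 1%nat = 1 -> Y 1%nat 2%nat = 0 -> Y 1%nat 3%nat = 0 -> Y 2%nat 2%nat = 1 ->
  Y 3%nat 2%nat = 0 -> Y 2%nat 3%nat = 0 -> Y 3%nat 3%nat = 1 ->
  Z 2%nat 1%nat = 0 -> Z 3%nat 1%nat = 0 ->
  meq C (mk3 (S 1%nat 1%nat / Defs.d2 s S) (s 1%nat 2%nat) (s 1%nat 3%nat)
             (S 2%nat 1%nat / Defs.d2 s S) (s 2%nat 2%nat) (s 2%nat 3%nat)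
             (S 3%nat 1%nat / Defs.d2 s S) (s 3%nat 2%nat) (s 3%nat 3%nat)).
Proof.
  intros Hdet H0 HCs HCS y11 y12 y13 y22 y32 y23 y33 z21 z31.
  assert (K : Defs.d2 s S * Z 1%nat 1%nat =
     cofactor s 1%nat 1%nat * C 1%nat 1%nat + cofactor s 2%nat 1%nat * C 2%nat 1%nat + cofactor s 3%nat 1%nat * C 3%nat 1%nat).
  { rewrite !HCS by ran. unfold Defs.d2, mmul, sum3, transpose. rewrite z21, z31. ring. }
  rewrite !HCs in K by ran.
  assert (K2 : Defs.d2 s S * Z 1%nat 1%nat = det3 s).
  { rewrite K. unfold det3, mmul, sum3, adj, cofactor, minor. rewrite y11. simpl. ring. }
  rewrite Hdet in K2.
  assert (z11 : Z 1%nat 1%nat = - (RtoC (-1)) / Defs.d2 s S).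
  { apply lin_solve; auto. rewrite K2. apply injective_projections; simpl; ring. }
  meq_cases.
  all: try (rewrite HCs by ran; unfold mmul, sum3; rewrite ?y11, ?y12, ?y13, ?y22, ?y32, ?y23, ?y33; ring).
  all: rewrite HCS by ran; unfold mmul, sum3; rewrite z21, z31, z11; field; auto.
Qed.

Lemma alg_n3 (s S C Y Z : Mat) :
  Defs.d3 s S <> RtoC 0 ->
  (forall i j, Ran i -> Ran j -> C i j = mmul s Y i j) ->
  (forall i j, Ran i -> Ran j -> C i j = mmul S Z i j) ->
  Y 1%nat 1%nat = 1 -> Y 2%nat 1%nat = 0 -> Y 3%nat 1%nat = 0 -> Y 2%nat 2%nat = 1 ->
  Y 3%nat 2%nat = 0 -> Y 2%nat 3%nat = 0 -> Y 3%nat 3%nat = 1 ->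
  Z 1%nat 2%nat = 0 -> Z 1%nat 3%nat = 0 ->
  meq C (mk3 (s 1%nat 1%nat)
             ((minor s 3 3 * minor S 2 1 - minor s 2 3 * minor S 3 1) / Defs.d3 s S)
             ((minor s 3 2 * minor S 2 1 - minor s 2 2 * minor S 3 1) / Defs.d3 s S)
             (s 2%nat 1%nat)
             ((minor s 3 3 * minor S 1 1 - minor s 1 3 * minor S 3 1) / Defs.d3 s S)
             ((minor s 3 2 * minor S 1 1 - minor s 1 2 * minor S 3 1) / Defs.d3 s S)
             (s 3%nat 1%nat)
             ((minor s 2 3 * minor S 1 1 - minor s 1 3 * minor S 2 1) / Defs.d3 s S)
             ((minor s 2 2 * minor S 1 1 - minor s 1 2 * minor S 2 1) / Defs.d3 s S)).
Proof.
  intros H0 HCs HCS y11 y21 y31 y22 y32 y23 y33 z12 z13.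
  assert (K2 : adj S 1%nat 1%nat * C 1%nat 2%nat + adj S 1%nat 2%nat * C 2%nat 2%nat + adj S 1%nat 3%nat * C 3%nat 2%nat = RtoC 0).
  { rewrite !HCS by ran. unfold adj, cofactor, minor, mmul, sum3. rewrite z12. simpl. ring. }
  assert (K3 : adj S 1%nat 1%nat * C 1%nat 3%nat + adj S 1%nat 2%nat * C 2%nat 3%nat + adj S 1%nat 3%nat * C 3%nat 3%nat = RtoC 0).
  { rewrite !HCS by ran. unfold adj, cofactor, minor, mmul, sum3. rewrite z13. simpl. ring. }
  rewrite !HCs in K2, K3 by ran. unfold mmul, sum3 in K2, K3.
  rewrite y22, y32 in K2. rewrite y23, y33 in K3.
  set (X2 := adj S 1%nat 1%nat * s 1%nat 2%nat + adj S 1%nat 2%nat * s 2%nat 2%nat + adj S 1%nat 3%nat * s 3%nat 2%nat).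
  set (X3 := adj S 1%nat 1%nat * s 1%nat 3%nat + adj S 1%nat 2%nat * s 2%nat 3%nat + adj S 1%nat 3%nat * s 3%nat 3%nat).
  assert (a : Y 1%nat 2%nat = - X2 / Defs.d3 s S).
  { apply lin_solve; auto. rewrite <- K2. unfold X2, Defs.d3, adj, mmul, sum3, transpose. ring. }
  assert (b : Y 1%nat 3%nat = - X3 / Defs.d3 s S).
  { apply lin_solve; auto. rewrite <- K3. unfold X3, Defs.d3, adj, mmul, sum3, transpose. ring. }
  meq_cases; rewrite HCs by ran; unfold mmul, sum3; rewrite ?y11, ?y21, ?y31, ?y22, ?y32, ?y23, ?y33;
  try ring; rewrite ?a, ?b; unfold X2, X3, Defs.d3 in *; unfold adj, cofactor, minor, mmul, sum3, transpose; simpl; field;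
  unfold Defs.d3, mmul, sum3, transpose, cofactor, minor in H0; simpl in H0; auto.
Qed.

End Mod_B10.
Import Mod_B10.

Module Mod_B11.
Open Scope R_scope.
Local Open Scope C_scope.

Lemma corner_in L T j : (0 < L)%R -> (0 < T)%R -> inOmega L T (fst (corner L T j)) (snd (corner L T j)).
Proof. intros. unfold inOmega. destruct j as [|[|[|[|j]]]]; simpl; lra. Qed.

Lemma mmul_meq_l A A' Y i j : (forall a b, Ran a -> Ran b -> A a b = A' a b) -> Ran i ->
  mmul A Y i j = mmul A' Y i j.
Proof. intros H Hi. unfold mmul, sum3. rewrite (H i 1%nat), (H i 2%nat), (H i 3%nat) by ran. reflexivity. Qed.

Lemma mmul_meq_r A Y Y' i j : (forall a b, Ran a -> Ran b -> Y a b = Y' a b) -> Ran j ->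
  mmul A Y i j = mmul A Y' i j.
Proof. intros H Hj. unfold mmul, sum3. rewrite (H 1%nat j), (H 2%nat j), (H 3%nat j) by ran. reflexivity. Qed.

Lemma mmul_idm_r A Y i j : (forall a b, Ran a -> Ran b -> Y a b = idm a b) -> Ran j ->
  mmul A Y i j = A i j.
Proof.
  intros H Hj. rewrite (mmul_meq_r A Y idm i j H Hj).
  destruct (Ran_cases j Hj) as [E|[E|E]]; subst j; unfold mmul, sum3, idm; simpl; ring.
Qed.

Lemma mmul_adj_idm X Y i j : (forall a b, Ran a -> Ran b -> X a b = idm a b) -> Ran i -> Ran j ->
  mmul (adj X) Y i j = Y i j.
Proof.
  intros H Hi Hj.
  assert (E : forall a b, Ran a -> Ran b -> adj X a b = idm a b).
  { intros a b Ha Hb. unfold adj, cofactor, minor.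
    destruct (Ran_cases a Ha) as [E1|[E1|E1]]; destruct (Ran_cases b Hb) as [E2|[E2|E2]]; subst a b; simpl;
    rewrite !H by ran; unfold idm; simpl; ring. }
  rewrite (mmul_meq_l _ _ Y i j E Hi).
  destruct (Ran_cases i Hi) as [E1|[E1|E1]]; subst i; unfold mmul, sum3, idm; simpl; ring.
Qed.

Lemma det3_meq X X' : (forall a b, Ran a -> Ran b -> X a b = X' a b) -> det3 X = det3 X'.
Proof.
  intros H. unfold det3, mmul, sum3, adj, cofactor, minor; simpl. rewrite !H by ran. reflexivity.
Qed.

Lemma det3_adj X : det3 (adj X) = det3 X * det3 X.
Proof. unfold det3, mmul, sum3, adj, cofactor, minor; simpl. ring. Qed.

Lemma det3_idm X : (forall a b, Ran a -> Ran b -> X a b = idm a b) -> det3 X = 1.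
Proof. intros H. rewrite (det3_meq X idm H). unfold det3, mmul, sum3, adj, cofactor, minor, idm; simpl. ring. Qed.

End Mod_B11.
Import Mod_B11.


Theorem mainTheorem2
  (sigma L T : R) (Q1 Q2 : nat -> nat -> R -> R -> C)
  (mu1 mu2 mu3 mu4 : R -> R -> Mat) (n : nat) (k : C) (M : R -> R -> Mat) :
  (sigma = 1%R \/ sigma = (-1)%R) -> (0 < L)%R -> (0 < T)%R ->
  smooth_on L T Q1 -> smooth_on L T Q2 -> nls_system sigma L T Q1 Q2 ->
  is_mu sigma L T k Q1 Q2 1 mu1 -> is_mu sigma L T k Q1 Q2 2 mu2 ->
  is_mu sigma L T k Q1 Q2 3 mu3 -> is_mu sigma L T k Q1 Q2 4 mu4 ->
  (1 <= n <= 4)%nat -> inD n k ->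
  is_M sigma L T k Q1 Q2 n M ->
  denom n k L (mu3 0%R 0%R) (mu1 0%R 0%R) (mu4 L 0%R) <> RtoC 0 ->
  meq (M 0%R 0%R) (Sformula n k L (mu3 0%R 0%R) (mu1 0%R 0%R) (mu4 L 0%R)).
Proof.
  intros Hsig HL HT HS1 HS2 Hnls Hm1 Hm2 Hm3 Hm4 Hn HD HM Hden.
  pose proof (proj1 (HS1 0%nat 0%nat)) as HQ1. pose proof (proj1 (HS2 0%nat 0%nat)) as HQ2.
  pose proof (proj1 (HS1 1%nat 0%nat)) as HQ1x. pose proof (proj1 (HS2 1%nat 0%nat)) as HQ2x.
  set (W1 := Vt1 sigma k Q1 Q2). set (W2 := Vt2 sigma k Q1 Q2).
  assert (Htr1 : forall x t, (0 <= x <= L)%R -> (0 <= t <= T)%R -> trace (W1 x t) = RtoC 0)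
    by (intros; apply trace_Vt1).
  assert (Htr2 : forall x t, (0 <= x <= L)%R -> (0 <= t <= T)%R -> trace (W2 x t) = RtoC 0)
    by (intros; apply trace_Vt2).
  assert (Hcj : forall j, forall i' j' : nat, inOmega L T (fst ((fun _ _ : nat => corner L T j) i' j')) (snd ((fun _ _ : nat => corner L T j) i' j')))
    by (intros; apply corner_in; auto).
  assert (HcM : forall i' j' : nat, inOmega L T (fst ((fun i j => corner L T (gamma n i j)) i' j')) (snd ((fun i j => corner L T (gamma n i j)) i' j')))
    by (intros; apply corner_in; auto).
  pose proof (Sol_of_int_eq sigma L T k Q1 Q2 HL HT HQ1 HQ2 HQ1x HQ2x _ mu1 Hm1 (Hcj 1%nat)) as Sol1.
  pose proof (Sol_of_int_eq sigma L T k Q1 Q2 HL HT HQ1 HQ2 HQ1x HQ2x _ mu2 Hm2 (Hcj 2%nat)) as Sol2.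
  pose proof (Sol_of_int_eq sigma L T k Q1 Q2 HL HT HQ1 HQ2 HQ1x HQ2x _ mu3 Hm3 (Hcj 3%nat)) as Sol3.
  pose proof (Sol_of_int_eq sigma L T k Q1 Q2 HL HT HQ1 HQ2 HQ1x HQ2x _ mu4 Hm4 (Hcj 4%nat)) as Sol4.
  pose proof (Sol_of_int_eq sigma L T k Q1 Q2 HL HT HQ1 HQ2 HQ1x HQ2x _ M HM HcM) as SolM.
  assert (Hst : forall j X, is_mu sigma L T k Q1 Q2 j X -> forall a b, Ran a -> Ran b ->
            X (fst (corner L T j)) (snd (corner L T j)) a b = idm a b).
  { intros j X HX a b Ha Hb. apply (start_val sigma L T k Q1 Q2 (fun _ _ => corner L T j) X HX (Hcj j) a b Ha Hb). }
  assert (HNst : forall j X, is_mu sigma L T k Q1 Q2 j X -> forall a b, Ran a -> Ran b ->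
            NN k X (fst (corner L T j)) (snd (corner L T j)) a b = idm a b).
  { intros j X HX a b Ha Hb. unfold NN. rewrite (Hst j X HX a b Ha Hb). apply ex_idm. }
  assert (N20 : forall a b, Ran a -> Ran b -> NN k mu2 0 0 a b = idm a b).
  { intros a b Ha Hb. apply (HNst 2%nat mu2 Hm2 a b Ha Hb). }
  assert (KE : forall X, Sol L T W1 W2 (NN k X) -> forall x t, inOmega L T x t ->
            forall a b, Ran a -> Ran b -> mmul (adj (NN k mu2 x t)) (NN k X x t) a b = X 0%R 0%R a b).
  { intros X SX x t [Hx Ht] a b Ha Hb.
    rewrite (P_const L T W1 W2 HL HT Htr1 Htr2 (NN k mu2) (NN k X) Sol2 SX x t a b Hx Ht Ha Hb).
    rewrite (mmul_adj_idm _ _ a b N20 Ha Hb). unfold NN. rewrite ex_00. ring. }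
  assert (HB : forall j X, is_mu sigma L T k Q1 Q2 j X -> Sol L T W1 W2 (NN k X) ->
            forall a b, Ran a -> Ran b ->
            adj (NN k mu2 (fst (corner L T j)) (snd (corner L T j))) a b = X 0%R 0%R a b).
  { intros j X HX SX a b Ha Hb.
    rewrite <- (KE X SX _ _ (corner_in L T j HL HT) a b Ha Hb).
    symmetry. apply mmul_idm_r; [apply (HNst j X HX) | exact Hb]. }
  assert (HMj : forall j X, is_mu sigma L T k Q1 Q2 j X -> Sol L T W1 W2 (NN k X) ->
            forall a b, Ran a -> Ran b ->
            M 0%R 0%R a b = mmul (X 0%R 0%R) (NN k M (fst (corner L T j)) (snd (corner L T j))) a b).
  { intros j X HX SX a b Ha Hb.
    rewrite <- (KE M SolM _ _ (corner_in L T j HL HT) a b Ha Hb).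
    apply mmul_meq_l; [apply (HB j X HX SX) | exact Ha]. }
  assert (Hdet2 : forall x t, inOmega L T x t -> det3 (NN k mu2 x t) = 1).
  { intros x t [Hx Ht]. rewrite (det_const L T W1 W2 HL HT Htr1 Htr2 (NN k mu2) Sol2 x t Hx Ht).
    apply det3_idm. exact N20. }
  assert (HdetX : forall j X, is_mu sigma L T k Q1 Q2 j X -> Sol L T W1 W2 (NN k X) -> det3 (X 0%R 0%R) = 1).
  { intros j X HX SX. rewrite <- (det3_meq _ _ (HB j X HX SX)). rewrite det3_adj.
    rewrite Hdet2 by (apply corner_in; auto). ring. }
  assert (HA : forall a b, Ran a -> Ran b -> mu4 0%R 0%R a b = Amat k L (mu3 0%R 0%R) (mu4 L 0%R) a b).
  { intros a b Ha Hb.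
    rewrite <- (KE mu4 Sol4 L 0%R (corner_in L T 3 HL HT) a b Ha Hb).
    unfold Amat. rewrite (mmul_meq_l _ (mu3 0%R 0%R) _ a b (HB 3%nat mu3 Hm3 Sol3) Ha).
    apply mmul_meq_r; [|exact Hb]. intros c d Hc Hd. unfold NN, hatexp, ex, fph, dL.
    f_equal. f_equal. ring. }
  assert (HM2 : forall a b, Ran a -> Ran b -> gamma n a b = 2%nat -> M 0%R 0%R a b = idm a b).
  { intros a b Ha Hb Hg. pose proof (start_val sigma L T k Q1 Q2 _ M HM HcM a b Ha Hb) as E.
    simpl in E. rewrite Hg in E. exact E. }
  assert (HMc : forall a b, Ran a -> Ran b -> NN k M (fst (corner L T (gamma n a b))) (snd (corner L T (gamma n a b))) a b = idm a b).
  { intros a b Ha Hb. unfold NN. rewrite (start_val sigma L T k Q1 Q2 _ M HM HcM a b Ha Hb). apply ex_idm. }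
  assert (Hn' : n = 1%nat \/ n = 2%nat \/ n = 3%nat \/ n = 4%nat) by lia.
  destruct Hn' as [E|[E|[E|E]]]; subst n.
  - apply (alg_n1 (Amat k L (mu3 0%R 0%R) (mu4 L 0%R)) (M 0%R 0%R) (NN k M (fst (corner L T 4)) (snd (corner L T 4)))).
    + rewrite <- (det3_meq _ _ HA). apply (HdetX 4%nat mu4 Hm4 Sol4).
    + exact Hden.
    + exact (HM2 2%nat 1%nat ltac:(ran) ltac:(ran) eq_refl).
    + exact (HM2 3%nat 1%nat ltac:(ran) ltac:(ran) eq_refl).
    + intros a b Ha Hb. rewrite (HMj 4%nat mu4 Hm4 Sol4 a b Ha Hb). apply mmul_meq_l; [exact HA | exact Ha].
    + exact (HMc 1%nat 1%nat ltac:(ran) ltac:(ran)).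
    + exact (HMc 1%nat 2%nat ltac:(ran) ltac:(ran)).
    + exact (HMc 1%nat 3%nat ltac:(ran) ltac:(ran)).
    + exact (HMc 2%nat 2%nat ltac:(ran) ltac:(ran)).
    + exact (HMc 3%nat 2%nat ltac:(ran) ltac:(ran)).
    + exact (HMc 2%nat 3%nat ltac:(ran) ltac:(ran)).
    + exact (HMc 3%nat 3%nat ltac:(ran) ltac:(ran)).
  - apply (alg_n2 (mu3 0%R 0%R) (mu1 0%R 0%R) (M 0%R 0%R) (NN k M (fst (corner L T 3)) (snd (corner L T 3)))
                  (NN k M (fst (corner L T 1)) (snd (corner L T 1)))).
    + apply (HdetX 3%nat mu3 Hm3 Sol3).
    + exact Hden.
    + intros a b Ha Hb. apply (HMj 3%nat mu3 Hm3 Sol3 a b Ha Hb).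
    + intros a b Ha Hb. apply (HMj 1%nat mu1 Hm1 Sol1 a b Ha Hb).
    + exact (HMc 1%nat 1%nat ltac:(ran) ltac:(ran)).
    + exact (HMc 1%nat 2%nat ltac:(ran) ltac:(ran)).
    + exact (HMc 1%nat 3%nat ltac:(ran) ltac:(ran)).
    + exact (HMc 2%nat 2%nat ltac:(ran) ltac:(ran)).
    + exact (HMc 3%nat 2%nat ltac:(ran) ltac:(ran)).
    + exact (HMc 2%nat 3%nat ltac:(ran) ltac:(ran)).
    + exact (HMc 3%nat 3%nat ltac:(ran) ltac:(ran)).
    + exact (HMc 2%nat 1%nat ltac:(ran) ltac:(ran)).
    + exact (HMc 3%nat 1%nat ltac:(ran) ltac:(ran)).
  - apply (alg_n3 (mu3 0%R 0%R) (mu1 0%R 0%R) (M 0%R 0%R) (NN k M (fst (corner L T 3)) (snd (corner L T 3)))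
                  (NN k M (fst (corner L T 1)) (snd (corner L T 1)))).
    + exact Hden.
    + intros a b Ha Hb. apply (HMj 3%nat mu3 Hm3 Sol3 a b Ha Hb).
    + intros a b Ha Hb. apply (HMj 1%nat mu1 Hm1 Sol1 a b Ha Hb).
    + exact (HMc 1%nat 1%nat ltac:(ran) ltac:(ran)).
    + exact (HMc 2%nat 1%nat ltac:(ran) ltac:(ran)).
    + exact (HMc 3%nat 1%nat ltac:(ran) ltac:(ran)).
    + exact (HMc 2%nat 2%nat ltac:(ran) ltac:(ran)).
    + exact (HMc 3%nat 2%nat ltac:(ran) ltac:(ran)).
    + exact (HMc 2%nat 3%nat ltac:(ran) ltac:(ran)).
    + exact (HMc 3%nat 3%nat ltac:(ran) ltac:(ran)).
    + exact (HMc 1%nat 2%nat ltac:(ran) ltac:(ran)).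
    + exact (HMc 1%nat 3%nat ltac:(ran) ltac:(ran)).
  - apply (alg_n4 (Amat k L (mu3 0%R 0%R) (mu4 L 0%R)) (M 0%R 0%R) (NN k M (fst (corner L T 4)) (snd (corner L T 4)))).
    + exact Hden.
    + exact (HM2 1%nat 2%nat ltac:(ran) ltac:(ran) eq_refl).
    + exact (HM2 1%nat 3%nat ltac:(ran) ltac:(ran) eq_refl).
    + intros a b Ha Hb. rewrite (HMj 4%nat mu4 Hm4 Sol4 a b Ha Hb). apply mmul_meq_l; [exact HA | exact Ha].
    + exact (HMc 1%nat 1%nat ltac:(ran) ltac:(ran)).
    + exact (HMc 2%nat 1%nat ltac:(ran) ltac:(ran)).
    + exact (HMc 3%nat 1%nat ltac:(ran) ltac:(ran)).
    + exact (HMc 2%nat 2%nat ltac:(ran) ltac:(ran)).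
    + exact (HMc 3%nat 2%nat ltac:(ran) ltac:(ran)).
    + exact (HMc 2%nat 3%nat ltac:(ran) ltac:(ran)).
    + exact (HMc 3%nat 3%nat ltac:(ran) ltac:(ran)).
Qed.
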